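(* Let $\mathcal{C}$ be a prevariety over a finite alphabet $A$ and let $\alpha:A^*\to M$ be a surjective morphism into a finite monoid. For every idempotent $e\in M$, the $\mathcal{C}$-orbit of $e$ for $\alpha$ is a subsemigroup of $M$; moreover, it is a monoid whose neutral element is $e$.
   Context: Fix a finite alphabet $A$. A prevariety is a class of regular languages over $A$ containing $\emptyset$ and $A^*$, closed under union, intersection, complement, and under the quotients $u^{-1}L=\{w\mid uw\in L\}$ and $Lu^{-1}=\{w\mid wu\in L\}$. A language $L_1$ is $\mathcal{C}$-separable from $L_2$ if some $K\in\mathcal{C}$ satisfies $L_1\subseteq K$ and $K\cap L_2=\emptyset$. For a morphism $\alpha:A^*\to M$, $(s,t)\in M^2$ is a $\mathcal{C}$-pair if $\alpha^{-1}(s)$ is not $\mathcal{C}$-separable from $\alpha^{-1}(t)$. For an idempotent $e\in M$, the $\mathcal{C}$-orbit of $e$ for $\alpha$ is $\{ese\mid s\in M,\ (e,s)\text{ is a }\mathcal{C}\text{-pair}\}$. *)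

(* Defs.v *)
From mathcomp Require Import all_boot.
Set Implicit Arguments. Unset Strict Implicit. Unset Printing Implicit Defensive.

Definition lang (A : Type) := seq A -> Prop.

Definition regular (A : finType) (L : lang A) : Prop :=
  exists (Q : finType) (q0 : Q) (delta : Q -> A -> Q) (F : pred Q),
    forall w, L w <-> F (foldl delta q0 w).

(* Since languages are sets, the class is also required
   to respect extensional equality of languages. *)
Definition prevariety (A : finType) (C : lang A -> Prop) : Prop :=
  (forall L, C L -> regular L) /\
  (forall L K, (forall w, L w <-> K w) -> C L -> C K) /\
  C (fun _ => False) /\ C (fun _ => True) /\
  (forall L K, C L -> C K -> C (fun w => L w \/ K w)) /\
  (forall L K, C L -> C K -> C (fun w => L w /\ K w)) /\
  (forall L, C L -> C (fun w => ~ L w)) /\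
  (forall L u, C L -> C (fun w => L (u ++ w)) /\ C (fun w => L (w ++ u))).

Definition separable (A : finType) (C : lang A -> Prop) (L1 L2 : lang A) : Prop :=
  exists K, [/\ C K, (forall w, L1 w -> K w) & (forall w, K w -> L2 w -> False)].

Definition is_monoid (M : finType) (mul : M -> M -> M) (one : M) : Prop :=
  [/\ (forall x y z, mul x (mul y z) = mul (mul x y) z),
      (forall x, mul one x = x) & (forall x, mul x one = x)].

Definition is_morphism (A M : finType) (mul : M -> M -> M) (one : M)
  (alpha : seq A -> M) : Prop :=
  alpha [::] = one /\ (forall u v, alpha (u ++ v) = mul (alpha u) (alpha v)).

Definition C_pair (A M : finType) (C : lang A -> Prop) (alpha : seq A -> M)
  (s t : M) : Prop :=
  ~ separable C (fun w => alpha w = s) (fun w => alpha w = t).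

Definition C_orbit (A M : finType) (C : lang A -> Prop) (mul : M -> M -> M)
  (alpha : seq A -> M) (e : M) : M -> Prop :=
  fun x => exists s, C_pair C alpha e s /\ x = mul (mul e s) e.

(* Main.v *)
Require Import Defs.
From mathcomp Require Import all_boot.
From Stdlib Require Import Classical.

Lemma big_inter (A I : finType) (C : lang A -> Prop) : prevariety C ->
  forall F : I -> lang A, (forall i, C (F i)) -> C (fun w => forall i, F i w).
Proof.
move=> [reg [ext0 [c0 [c1 [cor [cand [cneg cq]]]]]]] F HF.
have ext : forall L1 K1, C L1 -> (forall w, L1 w <-> K1 w) -> C K1 by move=> L1 K1 ? ?; apply: ext0; eauto.
have H : forall s : seq I, C (fun w => forall i, i \in s -> F i w).
  elim=> [|i s IH].
    by apply: (ext _ _ c1) => w; split=> // _ i.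
  apply: (ext _ _ (cand _ _ (HF i) IH)) => w; split.
    by move=> [H1 H2] j; rewrite inE => /orP [/eqP ->|]; [|apply: H2].
  by move=> H; split=> [|j Hj]; apply: H; rewrite inE ?eqxx ?Hj ?orbT.
apply: (ext _ _ (H (enum I))) => w; split=> H' i; first by apply: H'; rewrite mem_enum.
by move=> _; apply: H'.
Qed.

Lemma pair_mul (A M : finType) (mul : M -> M -> M) (one : M)
  (C : lang A -> Prop) (alpha : seq A -> M) s1 t1 s2 t2 :
  prevariety C -> is_morphism mul one alpha ->
  C_pair C alpha s1 t1 -> C_pair C alpha s2 t2 ->
  C_pair C alpha (mul s1 s2) (mul t1 t2).
Proof.
move=> Hpv [_ Hm] Hp1 Hp2 [K [CK H1 H2]].
have Hpv' := Hpv.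
move: Hpv' => [reg [ext0 [c0 [c1 [cor [cand [cneg cq]]]]]]].
have ext : forall L1 K1, C L1 -> (forall w, L1 w <-> K1 w) -> C K1 by move=> L1 K1 ? ?; apply: ext0; eauto.
have [Q [q0 [delta [Fi HK]]]] := reg K CK.
have HKs : forall x y, K (x ++ y) <-> foldl delta q0 x \in [set q | Fi (foldl delta q y)].
  by move=> x y; rewrite HK foldl_cat inE.
apply: Hp1.
exists (fun x => forall y, alpha y = s2 -> K (x ++ y)); split.
- pose F' (S : {set Q}) := fun x => forall y, alpha y = s2 ->
     [set q | Fi (foldl delta q y)] = S -> K (x ++ y).
  have CF : forall S, C (F' S).
    move=> S.
    case: (classic (exists y0, alpha y0 = s2 /\ [set q | Fi (foldl delta q y0)] = S)).
      move=> [y0 [a b]].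
      apply: (ext _ _ (proj2 (cq K y0 CK))) => x; split.
        move=> Hx y Hy Hs; apply/HKs; rewrite Hs -b; exact/HKs.
      by move=> Hx; apply: Hx.
    move=> N; apply: (ext _ _ c1) => x; split=> // _ y Hy Hs.
    by exfalso; apply: N; exists y.
  apply: (ext _ _ (@big_inter _ _ C Hpv F' CF)) => x; split.
    by move=> H y Hy; apply: (H _ y Hy).
  by move=> H S y Hy _; apply: H.
- by move=> w Hw y Hy; apply: H1; rewrite Hm Hw Hy.
- move=> w Hw Hwt; apply: Hp2.
  exists (fun y => K (w ++ y)); split.
  + exact: (proj1 (cq K w CK)).
  + exact: Hw.
  + by move=> y Hy Hyt; apply: (H2 (w ++ y)) => //; rewrite Hm Hwt Hyt.
Qed.

Theorem lemma5p5 (A M : finType) (mul : M -> M -> M) (one : M)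
  (C : lang A -> Prop) (alpha : seq A -> M) :
  prevariety C -> is_monoid mul one -> is_morphism mul one alpha ->
  (forall m : M, exists w, alpha w = m) ->
  forall e : M, mul e e = e ->
    (forall x y, C_orbit C mul alpha e x -> C_orbit C mul alpha e y ->
       C_orbit C mul alpha e (mul x y)) /\
    C_orbit C mul alpha e e /\
    (forall x, C_orbit C mul alpha e x -> mul e x = x /\ mul x e = x).
Proof.
move=> Hpv [assoc _ _] Hmor Hsurj e ee.
have refl : C_pair C alpha e e.
  move=> [K [CK H1 H2]]; have [w hw] := Hsurj e.
  exact: (H2 w (H1 w hw) hw).
split; last split.
- move=> x y [s [Hs ->]] [t [Ht ->]].
  exists (mul (mul s e) t); split.
    have := @pair_mul _ _ _ _ _ _ _ _ _ _ Hpv Hmor (@pair_mul _ _ _ _ _ _ _ _ _ _ Hpv Hmor Hs refl) Ht.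
    by rewrite !ee.
  by rewrite !assoc -(assoc (mul e s) e e) ee.
- by exists e; split=> //; rewrite !ee.
- move=> x [s [_ ->]]; split.
    by rewrite !assoc ee.
  by rewrite -assoc ee.
Qed.
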